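(* Let $L=\langle S,A,\to\rangle$ be a labelled transition system. For all $x,y\in\{o,b\}$ and $s,t\in S$, if $s\mathrel{\underline{\leftrightarrow}}_{(x,y)}t$ then $s\equiv_{E(x,y)}t$.
   Context: An LTS is $\langle S,A,\to\rangle$ with states $S$, actions $A$ containing the internal action $\tau$, and $\to\subseteq S\times A\times S$; write $s\xrightarrow{a}t$, and $\twoheadrightarrow$ for the reflexive-transitive closure of $\xrightarrow{\tau}$. For $R\subseteq S\times S$ and $s,s',t$: $s\twoheadrightarrow_{o,R,t}s'$ iff $s\twoheadrightarrow s'$; $s\twoheadrightarrow_{b,R,t}s'$ iff $s\twoheadrightarrow s'$, $t\,R\,s$ and $t\,R\,s'$. For $x,y\in\{o,b\}$, a symmetric $R$ is an $(x,y)$-generic bisimulation if whenever $s\,R\,t$ and $s\xrightarrow{a}s'$, either $a=\tau$ and $s'\,R\,t$, or there exist $t',t_1,t_2$ with $t\twoheadrightarrow_{x,R,s}t_1\xrightarrow{a}t_2\twoheadrightarrow_{y,R,s'}t'$ and $s'\,R\,t'$. $s\mathrel{\underline{\leftrightarrow}}_{(x,y)}t$ iff some $(x,y)$-generic bisimulation relates $s$ and $t$. Generic bisimulation game. Let $\frown,\smile$ be formal tags and $E\subseteq\{\frown,\smile\}$. Spoiler-owned configurations $\langle (s,t),c,m,r\rangle_S$ and Duplicator-owned $\langle (s,t),c,m,r\rangle_D$ have $(s,t)\in S\times S$, $c\in (A\times S)\cup\{\dagger\}$, $m\in (S\times\{\frown,\smile\})\cup\{\dagger\}$, $r\in\{*,\checkmark\}$.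 From $\langle (s,t),c,m,r\rangle_S$ Spoiler may: (S1) move to $\langle (s,t),c,m,*\rangle_D$ if $c\neq\dagger$; (S2a) for some $s\xrightarrow{a}s'$, move to $\langle (s,t),(a,s'),(t,\frown),*\rangle_D$ if $c=\dagger$; (S2b) for some $s\xrightarrow{a}s'$, move to $\langle (s,t),(a,s'),(t,\frown),\checkmark\rangle_D$ if $c\neq (a,s')$; (S3) for some $t\xrightarrow{a}t'$, move to $\langle (t,s),(a,t'),(s,\frown),\checkmark\rangle_D$. From $\langle (u,v),(a,u'),(\bar v,f),r\rangle_D$ Duplicator may: (D1) move to $\langle (u',\bar v),\dagger,\dagger,\checkmark\rangle_S$ if $a=\tau$; (D2) if $f=\frown$ and $\bar v\xrightarrow{a}v'$: (a) move to $\langle (u',v'),(a,u'),(v',\smile),*\rangle_S$, or (b) move to $\langle (u',v'),\dagger,\dagger,\checkmark\rangle_S$, or (c) only if $\smile\in E$, move to $\langle (u,v),(a,u'),(v',\smile),*\rangle_S$; (D3) for some $\bar v\xrightarrow{\tau}v'$: (a) move to $\langle (u,v'),(a,u'),(v',f),*\rangle_S$, or (b) only if $f=\smile$, move to $\langle (u',v'),\dagger,\dagger,\checkmark\rangle_S$, or (c) only if $f\in E$, move to $\langle (u,v),(a,u'),(v',f),*\rangle_S$. Duplicator wins a finite play if Spoiler gets stuck, and an infinite play if it has infinitely many $\checkmark$ rewards; other plays are won by Spoiler. $s\equiv_E t$ iff Duplicator has a strategy winning all plays from $\langle (s,t),\dagger,\dagger,*\rangle_S$. $E(x,y)$ is the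 smallest set with $\frown\in E(o,y)$ and $\smile\in E(x,o)$ for all $x,y\in\{o,b\}$. *)

(* Defs.v *)
From Stdlib Require Import List Relations.
Set Implicit Arguments.

Section Defs.
Variables (S A : Type) (tau : A) (step : S -> A -> S -> Prop).

Definition tstep (s s' : S) : Prop := step s tau s'.
Definition taustar : S -> S -> Prop := clos_refl_trans S tstep.

Inductive ob : Type := o | b.

Definition genreach (x : ob) (R : S -> S -> Prop) (t s s' : S) : Prop :=
  match x with
  | o => taustar s s'
  | b => taustar s s' /\ R t s /\ R t s'
  end.

Definition symmetric_rel (R : S -> S -> Prop) : Prop :=
  forall s t, R s t -> R t s.

Definition generic_bisim (x y : ob) (R : S -> S -> Prop) : Prop :=
  symmetric_rel R /\
  forall s t s' a, R s t -> step s a s' ->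
    (a = tau /\ R s' t) \/
    (exists t' t1 t2,
        genreach x R s t t1 /\ step t1 a t2 /\ genreach y R s' t2 t' /\ R s' t').

Definition gen_bisimilar (x y : ob) (s t : S) : Prop :=
  exists R, generic_bisim x y R /\ R s t.

Inductive tag : Type := Frown | Smile.
Inductive owner : Type := Spoiler | Duplicator.

(** configuration <(s,t), c, m, r>_owner; [None] encodes dagger,
    [rw = false] encodes *, [rw = true] encodes the checkmark. *)
Record conf : Type := mkConf {
  own : owner;
  pos : S * S;
  cc  : option (A * S);
  mm  : option (S * tag);
  rw  : bool
}.

Definition Eset (x y : ob) (f : tag) : Prop :=
  match f with
  | Frown => x = o
  | Smile => y = o
  end.

Inductive move (E : tag -> Prop) : conf -> conf -> Prop :=
| mS1 s t c m r :
    c <> None ->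
    move E (mkConf Spoiler (s, t) c m r) (mkConf Duplicator (s, t) c m false)
| mS2a s t c m r a s' :
    step s a s' -> c = None ->
    move E (mkConf Spoiler (s, t) c m r)
           (mkConf Duplicator (s, t) (Some (a, s')) (Some (t, Frown)) false)
| mS2b s t c m r a s' :
    step s a s' -> c <> Some (a, s') ->
    move E (mkConf Spoiler (s, t) c m r)
           (mkConf Duplicator (s, t) (Some (a, s')) (Some (t, Frown)) true)
| mS3 s t c m r a t' :
    step t a t' ->
    move E (mkConf Spoiler (s, t) c m r)
           (mkConf Duplicator (t, s) (Some (a, t')) (Some (s, Frown)) true)
| mD1 u v a u' vb f r :
    a = tau ->
    move E (mkConf Duplicator (u, v) (Some (a, u')) (Some (vb, f)) r)
           (mkConf Spoiler (u', vb) None None true)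
| mD2a u v a u' vb f r v' :
    f = Frown -> step vb a v' ->
    move E (mkConf Duplicator (u, v) (Some (a, u')) (Some (vb, f)) r)
           (mkConf Spoiler (u', v') (Some (a, u')) (Some (v', Smile)) false)
| mD2b u v a u' vb f r v' :
    f = Frown -> step vb a v' ->
    move E (mkConf Duplicator (u, v) (Some (a, u')) (Some (vb, f)) r)
           (mkConf Spoiler (u', v') None None true)
| mD2c u v a u' vb f r v' :
    f = Frown -> step vb a v' -> E Smile ->
    move E (mkConf Duplicator (u, v) (Some (a, u')) (Some (vb, f)) r)
           (mkConf Spoiler (u, v) (Some (a, u')) (Some (v', Smile)) false)
| mD3a u v a u' vb f r v' :
    step vb tau v' ->
    move E (mkConf Duplicator (u, v) (Some (a, u')) (Some (vb, f)) r)
           (mkConf Spoiler (u, v') (Some (a, u')) (Some (v', f)) false)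
| mD3b u v a u' vb f r v' :
    step vb tau v' -> f = Smile ->
    move E (mkConf Duplicator (u, v) (Some (a, u')) (Some (vb, f)) r)
           (mkConf Spoiler (u', v') None None true)
| mD3c u v a u' vb f r v' :
    step vb tau v' -> E f ->
    move E (mkConf Duplicator (u, v) (Some (a, u')) (Some (vb, f)) r)
           (mkConf Spoiler (u, v) (Some (a, u')) (Some (v', f)) false).

(** A (history-dependent) Duplicator strategy maps the history of the play
    (the list of configurations visited so far, in order, ending with the
    current one) to the next configuration. *)
Definition strategy : Type := list conf -> conf.

Definition history (p : nat -> conf) (n : nat) : list conf :=
  map p (seq 0 (Datatypes.S n)).

Definition consistent_step (E : tag -> Prop) (sigma : strategy)
    (p : nat -> conf) (i : nat) : Prop :=
  match own (p i) with
  | Spoiler => move E (p i) (p (Datatypes.S i))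
  | Duplicator => p (Datatypes.S i) = sigma (history p i)
  end.

(** sigma is winning from c0:
    (1) along every consistent finite play prefix ending in a Duplicator
        configuration, sigma prescribes a legal move (so Duplicator is never
        stuck; finite maximal plays therefore end with Spoiler stuck, which
        Duplicator wins);
    (2) every consistent infinite play has infinitely many checkmarks. *)
Definition winning_strategy (E : tag -> Prop) (c0 : conf) (sigma : strategy)
  : Prop :=
  (forall (p : nat -> conf) (n : nat),
      p 0 = c0 ->
      (forall i, i < n -> consistent_step E sigma p i) ->
      own (p n) = Duplicator ->
      move E (p n) (sigma (history p n))) /\
  (forall p : nat -> conf,
      p 0 = c0 ->
      (forall i, consistent_step E sigma p i) ->
      forall n, exists m, n <= m /\ rw (p m) = true).

Definition game_equiv (E : tag -> Prop) (s t : S) : Prop :=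
  exists sigma : strategy,
    winning_strategy E (mkConf Spoiler (s, t) None None false) sigma.

End Defs.

(* Main.v *)
Require Import Defs.
From Stdlib Require Import List Relations ClassicalEpsilon Classical Lia Arith.

Definition KK {St A : Type} (tau : A) (step : St -> A -> St -> Prop)
  (B : St -> St -> Prop) (u v : St) : Prop :=
  (exists v1, taustar tau step v v1 /\ B u v1) /\
  (exists u1, taustar tau step u u1 /\ B u1 v).

Definition toD {St A : Type} (c : conf St A) : conf St A :=
  mkConf Duplicator (pos c) (cc c) (mm c) false.

Inductive Plan {St A : Type} (tau : A) (step : St -> A -> St -> Prop)
  (E : tag -> Prop) (K : St -> St -> Prop) : nat -> conf St A -> Prop :=
| PEnd n d d' : move tau step E d d' -> own d' = Spoiler -> rw d' = true ->
    cc d' = None -> K (fst (pos d')) (snd (pos d')) -> Plan tau step E K n d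
| PStep n d d' : move tau step E d d' -> own d' = Spoiler -> rw d' = false ->
    cc d' <> None -> K (fst (pos d')) (snd (pos d')) ->
    Plan tau step E K n (toD d') -> Plan tau step E K (Datatypes.S n) d.

Lemma genreach_taustar {St A : Type} (tau : A) step x R (t s s' : St) :
  genreach tau step x R t s s' -> taustar tau step s s'.
Proof. destruct x; simpl; tauto. Qed.

Lemma transfer {St A : Type} (tau : A) step x y (B : St -> St -> Prop)
  (HB : generic_bisim tau step x y B) p q p' :
  B p q -> taustar tau step p p' -> exists q', taustar tau step q q' /\ B p' q'.
Proof.
  intros Hpq Hp. revert q Hpq.
  induction Hp as [p p' Hst | p | p1 p2 p3 H12 IH12 H23 IH23]; intros q Hpq.
  - destruct HB as [Hsym Htr].
    destruct (Htr _ _ _ _ Hpq Hst) as [[_ H]|[t' [t1 [t2 [H1 [H2 [H3 H4]]]]]]].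
    + exists q; split; [apply rt_refl| exact H].
    + exists t'. split; [|exact H4].
      apply genreach_taustar in H1. apply genreach_taustar in H3.
      eapply rt_trans; [exact H1|]. eapply rt_trans; [apply rt_step; exact H2| exact H3].
  - exists q; split; [apply rt_refl|exact Hpq].
  - destruct (IH12 q Hpq) as [q1 [Hq1 B1]].
    destruct (IH23 q1 B1) as [q2 [Hq2 B2]].
    exists q2; split; [eapply rt_trans; eauto| exact B2].
Qed.

Lemma B_K {St A : Type} (tau : A) step (B : St -> St -> Prop) u v :
  B u v -> KK tau step B u v.
Proof. intros H; split; [exists v|exists u]; split; auto; apply rt_refl. Qed.

Lemma K_sym {St A : Type} (tau : A) step (B : St -> St -> Prop) u v :
  symmetric_rel B -> KK tau step B u v -> KK tau step B v u.
Proof.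
  intros Hs [[v1 [H1 H2]] [u1 [H3 H4]]]. split.
  - exists u1; split; auto.
  - exists v1; split; auto.
Qed.

Lemma anchor {St A : Type} (tau : A) step x y (B : St -> St -> Prop)
  (HB : generic_bisim tau step x y B) u v w u1 :
  B u w -> taustar tau step u u1 -> B u1 v ->
  forall z, taustar tau step v z -> taustar tau step z w -> KK tau step B u z.
Proof.
  intros Buw Hu Bv z Hvz Hzw. split.
  - exists w; split; auto.
  - pose proof HB as [Hsym Htr].
    destruct (@transfer _ _ tau step x y B HB _ _ _ (Hsym _ _ Bv) Hvz) as [u2 [Hu2 Bz]].
    exists u2; split; [eapply rt_trans; eauto| apply Hsym; exact Bz].
Qed.

Lemma walk_a {St A : Type} (tau : A) step E (K : St -> St -> Prop)
  (u : St) (a : A) (u' w : St) :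
  (forall r, exists n, Plan tau step E K n
      (mkConf Duplicator (u, w) (Some (a, u')) (Some (w, Frown)) r)) ->
  forall v, clos_refl_trans_1n St (tstep tau step) v w ->
  (forall z, clos_refl_trans_1n St (tstep tau step) v z ->
             clos_refl_trans_1n St (tstep tau step) z w -> K u z) ->
  forall r, exists n, Plan tau step E K n
      (mkConf Duplicator (u, v) (Some (a, u')) (Some (v, Frown)) r).
Proof.
  intros Hgoal v Hv. revert Hgoal. induction Hv as [v | v v1 w Hs Hr IH]; intros Hgoal Hc r.
  - apply Hgoal.
  - destruct (IH Hgoal (fun z H1 H2 => Hc z (Relation_Operators.rt1n_trans _ _ _ _ _ Hs H1) H2) false)
      as [n Hn].
    exists (Datatypes.S n).
    eapply PStep with (d' := mkConf Spoiler (u, v1) (Some (a, u')) (Some (v1, Frown)) false).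
    + apply mD3a. exact Hs.
    + reflexivity.
    + reflexivity.
    + discriminate.
    + simpl. apply Hc; [eapply Relation_Operators.rt1n_trans; [exact Hs| apply rt1n_refl]| exact Hr].
    + exact Hn.
Qed.

Lemma walk_c {St A : Type} (tau : A) step E (K : St -> St -> Prop)
  (u v0 : St) (a : A) (u' w : St) (f : tag) :
  E f -> K u v0 ->
  (forall r, exists n, Plan tau step E K n
      (mkConf Duplicator (u, v0) (Some (a, u')) (Some (w, f)) r)) ->
  forall v, clos_refl_trans_1n St (tstep tau step) v w ->
  forall r, exists n, Plan tau step E K n
      (mkConf Duplicator (u, v0) (Some (a, u')) (Some (v, f)) r).
Proof.
  intros Hf HK Hgoal v Hv. revert Hgoal. induction Hv as [v | v v1 w Hs Hr IH]; intros Hgoal r.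
  - apply Hgoal.
  - destruct (IH Hgoal false) as [n Hn].
    exists (Datatypes.S n).
    eapply PStep with (d' := mkConf Spoiler (u, v0) (Some (a, u')) (Some (v1, f)) false).
    + apply mD3c; assumption.
    + reflexivity.
    + reflexivity.
    + discriminate.
    + exact HK.
    + exact Hn.
Qed.

Lemma post {St A : Type} (tau : A) step x y (B : St -> St -> Prop)
  (u v0 : St) (a : A) (u' t1 t2 t3 : St) :
  KK tau step B u v0 -> step t1 a t2 -> genreach tau step y B u' t2 t3 -> B u' t3 ->
  forall r, exists n, Plan tau step (Eset x y) (KK tau step B) n
      (mkConf Duplicator (u, v0) (Some (a, u')) (Some (t1, Frown)) r).
Proof.
  intros HK H12 Hg B3 r. destruct y; simpl in Hg.
  - apply clos_rt_rtn1 in Hg. destruct Hg as [|t' t3' Hst Hrt].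
    + exists 0. eapply PEnd with (d' := mkConf Spoiler (u', t2) None None true).
      * apply mD2b; auto.
      * reflexivity.
      * reflexivity.
      * reflexivity.
      * simpl; apply B_K; exact B3.
    + assert (Hw : forall r, exists n, Plan tau step (Eset x o) (KK tau step B) n
        (mkConf Duplicator (u, v0) (Some (a, u')) (Some (t', Smile)) r)).
      { intros r'. exists 0.
        eapply PEnd with (d' := mkConf Spoiler (u', t3') None None true).
        - apply mD3b; auto.
        - reflexivity.
        - reflexivity.
        - reflexivity.
        - simpl; apply B_K; exact B3. }
      apply clos_rtn1_rt, clos_rt_rt1n in Hrt.
      destruct (@walk_c _ _ tau step (Eset x o) (KK tau step B) u v0 a u' t' Smile eq_refl HK Hw t2 Hrt false)
        as [n Hn].
      exists (Datatypes.S n).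
      eapply PStep with (d' := mkConf Spoiler (u, v0) (Some (a, u')) (Some (t2, Smile)) false).
      * apply mD2c; auto. reflexivity.
      * reflexivity.
      * reflexivity.
      * discriminate.
      * exact HK.
      * exact Hn.
  - destruct Hg as [_ [B2 _]]. exists 0.
    eapply PEnd with (d' := mkConf Spoiler (u', t2) None None true).
    + apply mD2b; auto.
    + reflexivity.
    + reflexivity.
    + reflexivity.
    + simpl; apply B_K; exact B2.
Qed.

Lemma main_challenge {St A : Type} (tau : A) step x y (B : St -> St -> Prop)
  (HB : generic_bisim tau step x y B) (u v : St) (a : A) (u' : St) :
  KK tau step B u v -> step u a u' ->
  forall r, exists n, Plan tau step (Eset x y) (KK tau step B) n
      (mkConf Duplicator (u, v) (Some (a, u')) (Some (v, Frown)) r).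
Proof.
  intros HK Hst.
  pose proof HK as [[v1 [Hvv1 Buv1]] [u1 [Huu1 Bu1v]]].
  pose proof HB as [Hsym Htr].
  destruct (Htr _ _ _ _ Buv1 Hst) as [[Ha B1]|[t' [t1 [t2 [H1 [H2 [H3 H4]]]]]]].
  - subst a.
    assert (Hend : forall p r, exists n, Plan tau step (Eset x y) (KK tau step B) n
      (mkConf Duplicator p (Some (tau, u')) (Some (v1, Frown)) r)).
    { intros [p1 p2] r. exists 0.
      eapply PEnd with (d' := mkConf Spoiler (u', v1) None None true).
      - apply mD1. reflexivity.
      - reflexivity.
      - reflexivity.
      - reflexivity.
      - simpl; apply B_K; exact B1. }
    destruct x.
    + apply (@walk_c _ _ tau step (Eset o y) (KK tau step B) u v tau u' v1 Frown eq_refl HK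
               (Hend (u, v))).
      apply clos_rt_rt1n; exact Hvv1.
    + apply (@walk_a _ _ tau step (Eset b y) (KK tau step B) u tau u' v1 (Hend (u, v1))).
      * apply clos_rt_rt1n; exact Hvv1.
      * intros z Hz1 Hz2. apply clos_rt1n_rt in Hz1. apply clos_rt1n_rt in Hz2.
        exact (@anchor _ _ tau step b y B HB _ _ _ _ Buv1 Huu1 Bu1v _ Hz1 Hz2).
  - destruct x.
    + simpl in H1.
      apply (@walk_c _ _ tau step (Eset o y) (KK tau step B) u v a u' t1 Frown eq_refl HK
               (@post _ _ tau step o y B u v a u' t1 t2 t' HK H2 H3 H4)).
      apply clos_rt_rt1n; eapply rt_trans; eauto.
    + destruct H1 as [H1 [_ Bt1]].
      apply (@walk_a _ _ tau step (Eset b y) (KK tau step B) u a u' t1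
               (@post _ _ tau step b y B u t1 a u' t1 t2 t' (B_K tau step B u t1 Bt1) H2 H3 H4)).
      * apply clos_rt_rt1n; eapply rt_trans; eauto.
      * intros z Hz1 Hz2. apply clos_rt1n_rt in Hz1. apply clos_rt1n_rt in Hz2.
        exact (@anchor _ _ tau step b y B HB _ _ _ _ Bt1 Huu1 Bu1v _ Hz1 Hz2).
Qed.

Definition Inv {St A : Type} (tau : A) step E (K : St -> St -> Prop) (c : conf St A) : Prop :=
  match own c with
  | Spoiler => K (fst (pos c)) (snd (pos c)) /\
               (cc c = None \/ exists n, Plan tau step E K n (toD c))
  | Duplicator => exists n, Plan tau step E K n c
  end.

Definition mu {St A : Type} (tau : A) step E (K : St -> St -> Prop) (d : conf St A) : nat :=
  epsilon (inhabits 0) (fun n => Plan tau step E K n d /\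
                                 forall k, Plan tau step E K k d -> n <= k).

Definition Good_next {St A : Type} (tau : A) step E (K : St -> St -> Prop)
  (d d' : conf St A) : Prop :=
  move tau step E d d' /\ own d' = Spoiler /\ K (fst (pos d')) (snd (pos d')) /\
  ((rw d' = true /\ cc d' = None) \/
   (rw d' = false /\ cc d' <> None /\ 0 < mu tau step E K d /\
    Plan tau step E K (pred (mu tau step E K d)) (toD d'))).

Definition next {St A : Type} (tau : A) step E (K : St -> St -> Prop) (d : conf St A) :=
  epsilon (inhabits d) (Good_next tau step E K d).

Lemma min_exists (P : nat -> Prop) : (exists n, P n) -> exists n, P n /\ forall k, P k -> n <= k.
Proof.
  intros [n Hn]. revert Hn.
  induction n as [n IH] using (well_founded_induction lt_wf). intros Hn.
  destruct (classic (exists k, k < n /\ P k)) as [[k [Hk Pk]]|Hno].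
  - exact (IH k Hk Pk).
  - exists n; split; auto. intros k Pk.
    destruct (Nat.le_gt_cases n k); auto. exfalso; apply Hno; eauto.
Qed.

Lemma mu_spec {St A : Type} (tau : A) step E (K : St -> St -> Prop) (d : conf St A) :
  (exists n, Plan tau step E K n d) ->
  Plan tau step E K (mu tau step E K d) d /\
  forall k, Plan tau step E K k d -> mu tau step E K d <= k.
Proof.
  intros H. unfold mu. apply epsilon_spec. apply min_exists. exact H.
Qed.

Lemma next_spec {St A : Type} (tau : A) step E (K : St -> St -> Prop) (d : conf St A) :
  (exists n, Plan tau step E K n d) -> Good_next tau step E K d (next tau step E K d).
Proof.
  intros H. unfold next. apply epsilon_spec.
  destruct (mu_spec tau step E K d H) as [Hp _].
  remember (mu tau step E K d) as m eqn:Hm.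
  destruct Hp as [n d0 d' H1 H2 H3 H4 H5 | n d0 d' H1 H2 H3 H4 H5 H6].
  - exists d'. repeat split; auto.
  - exists d'. repeat split; auto. right. rewrite <- Hm. simpl. repeat split; auto. lia.
Qed.

Lemma inv_S {St A : Type} (tau : A) step x y (B : St -> St -> Prop)
  (HB : generic_bisim tau step x y B) (c c' : conf St A) :
  own c = Spoiler -> Inv tau step (Eset x y) (KK tau step B) c ->
  move tau step (Eset x y) c c' -> Inv tau step (Eset x y) (KK tau step B) c'.
Proof.
  intros Ho HI Hm. destruct c as [oc [s t] c m r]. simpl in Ho. subst oc.
  unfold Inv in HI. simpl in HI. destruct HI as [HK Hc].
  inversion Hm; subst; unfold Inv; simpl.
  - destruct Hc as [Hc|Hc]; [congruence| exact Hc].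
  - apply (main_challenge tau step x y B HB); assumption.
  - apply (main_challenge tau step x y B HB); assumption.
  - apply (main_challenge tau step x y B HB); [|assumption].
    apply K_sym; [apply HB| exact HK].
Qed.

Lemma inv_D {St A : Type} (tau : A) step E (K : St -> St -> Prop) (c : conf St A) :
  own c = Duplicator -> Inv tau step E K c ->
  move tau step E c (next tau step E K c) /\ Inv tau step E K (next tau step E K c).
Proof.
  intros Ho HI. unfold Inv in HI. rewrite Ho in HI.
  destruct (next_spec tau step E K c HI) as [Hm [Ho' [HK Hr]]].
  split; [exact Hm|]. unfold Inv. rewrite Ho'. split; [exact HK|].
  destruct Hr as [[_ Hn]|[_ [_ [_ Hp]]]]; [left; exact Hn| right; eauto].
Qed.

Lemma last_history {St A : Type} (p : nat -> conf St A) n c :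
  last (history p n) c = p n.
Proof.
  unfold history. rewrite seq_S, map_app. simpl. apply last_last.
Qed.

Lemma spoiler_false {St A : Type} (tau : A) step E (c c' : conf St A) :
  own c = Spoiler -> cc c <> None -> move tau step E c c' -> rw c' = false -> c' = toD c.
Proof.
  intros Ho Hc Hm Hr. destruct c as [oc [s t] cx m r]. simpl in *. subst oc.
  inversion Hm; subst; simpl in *; try congruence; try reflexivity.
Qed.

Lemma spoiler_to_D {St A : Type} (tau : A) step E (c c' : conf St A) :
  own c = Spoiler -> move tau step E c c' -> own c' = Duplicator.
Proof.
  intros Ho Hm. destruct c as [oc [s t] cx m r]. simpl in *. subst oc.
  inversion Hm; subst; reflexivity.
Qed.

Lemma inv_play {St A : Type} (tau : A) step x y (B : St -> St -> Prop)
  (HB : generic_bisim tau step x y B) (c0 : conf St A)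
  (H0 : Inv tau step (Eset x y) (KK tau step B) c0) (p : nat -> conf St A) :
  p 0 = c0 ->
  forall n, (forall i, i < n -> consistent_step tau step (Eset x y)
         (fun h => next tau step (Eset x y) (KK tau step B) (last h c0)) p i) ->
  Inv tau step (Eset x y) (KK tau step B) (p n).
Proof.
  intros Hp0 n. induction n as [|n IH]; intros Hc.
  - rewrite Hp0; exact H0.
  - assert (HI : Inv tau step (Eset x y) (KK tau step B) (p n)) by (apply IH; intros; apply Hc; lia).
    assert (Hn := Hc n (Nat.lt_succ_diag_r n)). unfold consistent_step in Hn.
    destruct (own (p n)) eqn:Ho.
    + exact (inv_S tau step x y B HB _ _ Ho HI Hn).
    + rewrite Hn, last_history. apply (inv_D tau step (Eset x y) (KK tau step B) (p n) Ho HI).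
Qed.

Theorem lemma5p5 (S A : Type) (tau : A) (step : S -> A -> S -> Prop)
  (x y : ob) (s t : S) :
  gen_bisimilar tau step x y s t ->
  game_equiv tau step (Eset x y) s t.
Proof.
  intros [B [HB Bst]].
  set (E := Eset x y). set (K := KK tau step B).
  set (c0 := @mkConf S A Spoiler (s, t) None None false).
  assert (H0 : Inv tau step E K c0).
  { unfold Inv; simpl. split; [apply B_K; exact Bst| left; reflexivity]. }
  exists (fun h => next tau step E K (last h c0)).
  split.
  - intros p n Hp0 Hc Ho. rewrite last_history.
    apply (inv_D tau step E K (p n) Ho).
    exact (inv_play tau step x y B HB c0 H0 p Hp0 n Hc).
  - intros p Hp0 Hc n.
    assert (HI : forall i, Inv tau step E K (p i)).
    { intro i. apply (inv_play tau step x y B HB c0 H0 p Hp0 i). intros; apply Hc. }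
    apply NNPP; intros Hno.
    assert (Hf : forall m, n <= m -> rw (p m) = false).
    { intros m Hm. destruct (rw (p m)) eqn:Er; auto. exfalso; apply Hno; eauto. }
    assert (Hdesc : forall k i, n <= i -> own (p i) = Duplicator ->
                      mu tau step E K (p i) <= k -> False).
    { induction k as [|k IHk]; intros i Hi Ho Hmu.
      all: assert (Hpi := HI i); unfold Inv in Hpi; rewrite Ho in Hpi;
        assert (Hg := next_spec tau step E K (p i) Hpi);
        assert (Hci := Hc i); unfold consistent_step in Hci; rewrite Ho in Hci;
        rewrite last_history in Hci; rewrite <- Hci in Hg;
        destruct Hg as [_ [Ho1 [_ [[Hr _]|[Hr [Hcc [Hpos Hpl]]]]]]];
        [rewrite (Hf (Datatypes.S i)) in Hr by lia; discriminate| ];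
        assert (Hc2 := Hc (Datatypes.S i)); unfold consistent_step in Hc2; rewrite Ho1 in Hc2;
        assert (Heq := spoiler_false tau step E _ _ Ho1 Hcc Hc2 (Hf (Datatypes.S (Datatypes.S i)) ltac:(lia)));
        assert (Hle : mu tau step E K (p (Datatypes.S (Datatypes.S i))) <=
                      pred (mu tau step E K (p i)))
          by (rewrite Heq; apply (mu_spec tau step E K); eauto).
      - lia.
      - apply (IHk (Datatypes.S (Datatypes.S i))); [lia| rewrite Heq; reflexivity| lia]. }
    destruct (own (p n)) eqn:Ho.
    + assert (Hc0 := Hc n). unfold consistent_step in Hc0. rewrite Ho in Hc0.
      apply (Hdesc _ (Datatypes.S n) (Nat.le_succ_diag_r n)
               (spoiler_to_D tau step E _ _ Ho Hc0) (le_n _)).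
    + exact (Hdesc _ n (le_n n) Ho (le_n _)).
Qed.
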